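(* Let $G$ be a graph with a tree-representation $\{T(v)\}$ in which every subtree $T(v)$ is a downward path in the host tree. Then any bottom-up enumeration order $v_1,\dots,v_n$ of the vertices is a strong elimination order of $G$.
   Context: Graphs are finite and simple; $N[v]$ denotes the closed neighbourhood of $v$. A host tree $T$ is a rooted tree whose arcs carry positive integer weights; the depth of a node is the sum of arc weights on its path to the root. A subtree is a connected node set of $T$; its root is its node of smallest depth. A downward path is the node set of the path from a node to one of its descendants. A tree-representation of $G$ assigns to each vertex $v$ a subtree $T(v)$ of $T$ such that for distinct $v,w$, $(v,w)$ is an edge iff $T(v)\cap T(w)\neq\emptyset$. A bottom-up enumeration order is an ordering $v_1,\dots,v_n$ of the vertices in which the depths of the roots of $T(v_1),\dots,T(v_n)$ are non-increasing (ties broken arbitrarily). A strong elimination order is an ordering $v_1,\dots,v_n$ of the vertices such that for all $i,j,k,\ell$: if $i<j$, $k<\ell$, $v_k,v_\ell\in N[v_i]$ and $v_k\in N[v_j]$, then $v_\ell\in N[v_j]$. *)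

(* Defs.v *)
From mathcomp Require Import all_boot.
Set Implicit Arguments. Unset Strict Implicit. Unset Printing Implicit Defensive.

(* ---------- Host tree ----------
   A rooted tree on the node type N is given by a parent function [par],
   a root [r] with [par r = r], such that every node reaches [r] by
   iterating [par]; the arc (x, par x) (x <> r) carries weight [w x],
   a positive integer. *)

Definition is_weighted_rooted_tree (N : finType) (par : N -> N) (r : N)
  (w : N -> nat) : Prop :=
  par r = r /\ (forall x : N, exists k, iter k par x = r)
  /\ (forall x : N, x != r -> 0 < w x).

(* depth = sum of arc weights on the path to the root (fuel #|N| suffices) *)
Fixpoint depth_fuel (N : finType) (par : N -> N) (r : N) (w : N -> nat)
  (k : nat) (x : N) : nat :=
  match k with
  | 0 => 0
  | k'.+1 => if x == r then 0 else w x + depth_fuel par r w k' (par x)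
  end.

Definition depth (N : finType) (par : N -> N) (r : N) (w : N -> nat) (x : N)
  : nat := depth_fuel par r w #|N| x.

Definition tree_adj (N : finType) (par : N -> N) (r : N) : rel N :=
  fun x y => ((x != r) && (par x == y)) || ((y != r) && (par y == x)).

Definition is_subtree (N : finType) (par : N -> N) (r : N) (S : {set N})
  : Prop :=
  S != set0 /\
  forall x y, x \in S -> y \in S ->
    connect (fun a b => [&& tree_adj par r a b, a \in S & b \in S]) x y.

Definition anc (N : finType) (par : N -> N) (a b : N) : Prop :=
  exists k, iter k par b = a.

Definition is_downward_path (N : finType) (par : N -> N) (S : {set N})
  : Prop :=
  exists a b, anc par a b /\
    forall x, x \in S <-> (anc par a x /\ anc par x b).

Definition is_subtree_root (N : finType) (par : N -> N) (r : N)
  (w : N -> nat) (S : {set N}) (x : N) : Prop :=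
  x \in S /\ forall y, y \in S -> depth par r w x <= depth par r w y.

Definition is_simple_graph (V : finType) (adj : rel V) : Prop :=
  symmetric adj /\ irreflexive adj.

Definition cnbhd (V : finType) (adj : rel V) (v : V) : {set V} :=
  [set u | (u == v) || adj v u].

Definition is_tree_representation (V N : finType) (adj : rel V)
  (par : N -> N) (r : N) (T : V -> {set N}) : Prop :=
  (forall v, is_subtree par r (T v)) /\
  (forall v u, v != u -> (adj v u <-> T v :&: T u != set0)).

(* orderings v_1..v_n are bijections o : 'I_n -> V *)
Definition is_bottom_up_order (V N : finType) (par : N -> N) (r : N)
  (w : N -> nat) (T : V -> {set N}) (n : nat) (o : 'I_n -> V) : Prop :=
  bijective o /\
  forall (i j : 'I_n) (xi xj : N), i < j ->
    is_subtree_root par r w (T (o i)) xi ->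
    is_subtree_root par r w (T (o j)) xj ->
    depth par r w xj <= depth par r w xi.

Definition is_strong_elimination_order (V : finType) (adj : rel V) (n : nat)
  (o : 'I_n -> V) : Prop :=
  bijective o /\
  forall i j k l : 'I_n, i < j -> k < l ->
    o k \in cnbhd adj (o i) -> o l \in cnbhd adj (o i) ->
    o k \in cnbhd adj (o j) -> o l \in cnbhd adj (o j).

(* Main.v *)
Require Import Defs.
From mathcomp Require Import all_boot.
Set Implicit Arguments. Unset Strict Implicit. Unset Printing Implicit Defensive.

Lemma anc_refl (N : finType) (par : N -> N) a : anc par a a.
Proof. by exists 0. Qed.

Lemma anc_trans (N : finType) (par : N -> N) a b c :
  anc par a b -> anc par b c -> anc par a c.
Proof. by move=> [k hk] [m hm]; exists (k + m); rewrite iterD hm. Qed.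

Lemma anc_cmp (N : finType) (par : N -> N) a b x :
  anc par a x -> anc par b x -> anc par a b \/ anc par b a.
Proof.
move=> [k hk] [m hm]; case: (leqP k m) => h.
  right; exists (m - k); by rewrite -hk -iterD subnK.
left; exists (k - m); by rewrite -hm -iterD subnK // ltnW.
Qed.

Lemma fuel_stable (N : finType) (par : N -> N) r w (hr : par r = r) m :
  forall x, iter m par x = r -> forall k, m <= k ->
  depth_fuel par r w k x = depth_fuel par r w m x.
Proof.
elim: m => [|m IH] x hx k hk.
  rewrite /= in hx; subst x; case: k hk => //= k _; by rewrite eqxx.
case: k hk => [|k] // hk /=.
case: eqP => // _; rewrite (IH (par x)) //; by rewrite -iterSr.
Qed.

Lemma reach_small (N : finType) (par : N -> N) r x :
  (exists k, iter k par x = r) -> exists m, m < #|N| /\ iter m par x = r.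
Proof.
move=> [k hk].
have hc : fconnect par x r by rewrite -hk fconnect_iter.
exists (findex par x r); split; last exact: iter_findex.
apply: leq_trans (findex_max hc) _; exact: max_card.
Qed.

Lemma depthE (N : finType) (par : N -> N) r w :
  is_weighted_rooted_tree par r w -> forall x, x != r ->
  depth par r w x = w x + depth par r w (par x).
Proof.
move=> [hr [hreach hw]] x hx.
have [m [hm1 hm2]] := reach_small (hreach (par x)).
rewrite /depth; move: hm1; case e: #|N| => [|n] // hm1.
rewrite /= (negbTE hx); congr (_ + _).
rewrite -[X in _ = X]/(depth_fuel par r w n.+1 (par x)).
by rewrite (fuel_stable w hr hm2) // (fuel_stable w hr hm2 (k := n.+1)) // ltnW.
Qed.

Lemma depth_par (N : finType) (par : N -> N) r w :
  is_weighted_rooted_tree par r w -> forall x,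
  depth par r w (par x) <= depth par r w x.
Proof.
move=> ht x; case: (eqVneq x r) => [->|hx]; first by case: ht => ->.
by rewrite (depthE ht hx) leq_addl.
Qed.

Lemma depth_anc_lt (N : finType) (par : N -> N) r w :
  is_weighted_rooted_tree par r w -> forall k b,
  iter k par b != b -> depth par r w (iter k par b) < depth par r w b.
Proof.
move=> ht; elim=> [|k IH] b; first by rewrite eqxx.
rewrite iterS => hne.
case: (eqVneq (iter k par b) b) => [e|hne'].
  rewrite e in hne *.
  have hb : b != r by apply/eqP => e2; move: hne; case: ht => hr _; rewrite e2 hr eqxx.
  rewrite (depthE ht hb); case: ht => _ [_ hw]; rewrite -[X in X < _]add0n ltn_add2r; exact: hw.
exact: leq_ltn_trans (depth_par ht _) (IH _ hne').
Qed.

Lemma depth_anc_le (N : finType) (par : N -> N) r w :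
  is_weighted_rooted_tree par r w -> forall a b,
  anc par a b -> depth par r w a <= depth par r w b.
Proof.
move=> ht a b [k <-]; case: (eqVneq (iter k par b) b) => [->//|h].
exact: ltnW (depth_anc_lt ht h).
Qed.

Lemma anc_depth (N : finType) (par : N -> N) r w :
  is_weighted_rooted_tree par r w -> forall a b x,
  anc par a x -> anc par b x -> depth par r w a <= depth par r w b -> anc par a b.
Proof.
move=> ht a b x ha hb hd; case: (anc_cmp ha hb) => // [[k hk]].
case: (eqVneq (iter k par a) a) => [e|ne].
  by rewrite -hk e; apply: anc_refl.
have := depth_anc_lt ht ne; rewrite hk => h; have := leq_trans h hd; by rewrite ltnn.
Qed.

Lemma meet_top (X : Type) (anc : X -> X -> Prop) (d : X -> nat)
  (atr : forall a b c, anc a b -> anc b c -> anc a c)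
  (acmp : forall a b x, anc a x -> anc b x -> d a <= d b -> anc a b)
  a1 b1 a2 b2 :
  (exists x, (anc a1 x /\ anc x b1) /\ (anc a2 x /\ anc x b2)) ->
  d a2 <= d a1 -> anc a2 a1 /\ anc a1 b2.
Proof.
move=> [x [[h1 h2] [h3 h4]]] hd; split; first exact: (acmp _ _ x).
exact: atr h1 h4.
Qed.

Lemma abstract_main (X : Type) (anc : X -> X -> Prop) (d : X -> nat)
  (arefl : forall a, anc a a)
  (atr : forall a b c, anc a b -> anc b c -> anc a c)
  (acmp : forall a b x, anc a x -> anc b x -> d a <= d b -> anc a b)
  ai bi aj bj ak bk al bl :
  (exists x, (anc ai x /\ anc x bi) /\ (anc ak x /\ anc x bk)) ->
  (exists x, (anc ai x /\ anc x bi) /\ (anc al x /\ anc x bl)) ->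
  (exists x, (anc aj x /\ anc x bj) /\ (anc ak x /\ anc x bk)) ->
  d aj <= d ai -> d al <= d ak ->
  (exists x, (anc aj x /\ anc x bj) /\ (anc al x /\ anc x bl)).
Proof.
move=> mik mil mjk dji dlk.
have swap : forall a1 b1 a2 b2,
  (exists x, (anc a1 x /\ anc x b1) /\ (anc a2 x /\ anc x b2)) ->
  (exists x, (anc a2 x /\ anc x b2) /\ (anc a1 x /\ anc x b1)).
  by move=> ? ? ? ? [x [h1 h2]]; exists x.
have wf : forall a1 b1 a2 b2,
  (exists x, (anc a1 x /\ anc x b1) /\ (anc a2 x /\ anc x b2)) -> anc a1 b1 /\ anc a2 b2.
  by move=> ? ? ? ? [x [[h1 h2] [h3 h4]]]; split; apply: atr; eauto.
have [abi abk] := wf _ _ _ _ mik.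
have [_ abl] := wf _ _ _ _ mil.
have [abj _] := wf _ _ _ _ mjk.
have MT := meet_top atr acmp.
case: (leqP (d ai) (d ak)) => [dik|/ltnW dki].
- have [hk1 hk2] := MT _ _ _ _ (swap _ _ _ _ mik) dik.
  have [hk3 hk4] := MT _ _ _ _ (swap _ _ _ _ mjk) (leq_trans dji dik).
  case: (leqP (d ai) (d al)) => [dil|/ltnW dli].
  + have [hl1 hl2] := MT _ _ _ _ (swap _ _ _ _ mil) dil.
    have alk : anc al ak := acmp _ _ _ hl2 hk2 dlk.
    have ajl : anc aj al := acmp _ _ _ hk3 alk (leq_trans dji dil).
    exists al; split; split; [exact: ajl | exact: atr alk hk4 | exact: arefl | exact: abl].
  + have [hl1 hl2] := MT _ _ _ _ mil dli.
    have aji : anc aj ai := acmp _ _ _ hk3 hk1 dji.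
    exists ai; split; split; [exact: aji | exact: atr hk1 hk4 | exact: hl1 | exact: hl2].
- have [hi1 hi2] := MT _ _ _ _ mik dki.
  have [hi3 hi4] := MT _ _ _ _ mil (leq_trans dlk dki).
  have alk : anc al ak := acmp _ _ _ hi3 hi1 dlk.
  case: (leqP (d ak) (d aj)) => [dkj|/ltnW djk].
  + have [hj1 hj2] := MT _ _ _ _ mjk dkj.
    have aji : anc aj ai := acmp _ _ _ hj2 hi2 dji.
    exists aj; split; split; [exact: arefl | exact: abj | exact: atr alk hj1 | exact: atr aji hi4].
  + have [hj1 hj2] := MT _ _ _ _ (swap _ _ _ _ mjk) djk.
    exists ak; split; split; [exact: hj1 | exact: hj2 | exact: alk | exact: atr hi1 hi4].
Qed.

Lemma nbE (V N : finType) (adj : rel V) (T : V -> {set N}) :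
  (forall v, T v != set0) ->
  (forall v u, v != u -> (adj v u <-> T v :&: T u != set0)) ->
  forall u v, v \in cnbhd adj u <-> exists x, x \in T u /\ x \in T v.
Proof.
move=> hne hrep u v; rewrite /cnbhd inE; split.
  case/orP => [/eqP ->|h].
    by have /set0Pn [x hx] := hne u; exists x.
  case: (eqVneq u v) => [->|huv].
    by have /set0Pn [x hx] := hne v; exists x.
  by have /set0Pn [x] := (hrep _ _ huv).1 h; rewrite inE => /andP [? ?]; exists x.
move=> [x [h1 h2]]; case: (eqVneq v u) => [->|hvu]; first by rewrite ?eqxx.
apply/orP; right; have huv : u != v by rewrite eq_sym.
apply/(hrep _ _ huv).2; apply/set0Pn; exists x; by rewrite inE h1 h2.
Qed.

Theorem corollary1 (V N : finType) (adj : rel V) (par : N -> N) (r : N)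
  (w : N -> nat) (T : V -> {set N}) (n : nat) (o : 'I_n -> V) :
  is_simple_graph adj ->
  is_weighted_rooted_tree par r w ->
  is_tree_representation adj par r T ->
  (forall v, is_downward_path par (T v)) ->
  is_bottom_up_order par r w T o ->
  is_strong_elimination_order adj o.
Proof.
move=> hg ht [hsub hrep] hpath [hbij hbu]; split => // i j k l hij hkl.
have hne : forall v, T v != set0 by move=> v; case: (hsub v).
have NB := nbE hne hrep.
have PD : forall v, exists a b, anc par a b /\
    (forall x, x \in T v <-> anc par a x /\ anc par x b) /\
    is_subtree_root par r w (T v) a.
  move=> v; have [a [b [hab hm]]] := hpath v; exists a, b; split => //; split => //.
  split; first by apply/hm; split => //; apply: anc_refl.
  by move=> y /hm [hy _]; apply: depth_anc_le.
have [ai [bi [_ [hmi hri]]]] := PD (o i).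
have [aj [bj [_ [hmj hrj]]]] := PD (o j).
have [ak [bk [_ [hmk hrk]]]] := PD (o k).
have [al [bl [_ [hml hrl]]]] := PD (o l).
have conv : forall u v a1 b1 a2 b2,
  (forall x, x \in T u <-> anc par a1 x /\ anc par x b1) ->
  (forall x, x \in T v <-> anc par a2 x /\ anc par x b2) ->
  (v \in cnbhd adj u <-> exists x, (anc par a1 x /\ anc par x b1) /\ (anc par a2 x /\ anc par x b2)).
  move=> u v a1 b1 a2 b2 h1 h2; split.
    by move=> /NB [x [/h1 ? /h2 ?]]; exists x.
  by move=> [x [/h1 ? /h2 ?]]; apply/NB; exists x.
move=> /(conv _ _ _ _ _ _ hmi hmk) mik /(conv _ _ _ _ _ _ hmi hml) mil
       /(conv _ _ _ _ _ _ hmj hmk) mjk.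
apply/(conv _ _ _ _ _ _ hmj hml).
apply: (abstract_main (@anc_refl _ par) (@anc_trans _ par) (anc_depth ht)) mik mil mjk _ _.
- exact: hbu hij hri hrj.
- exact: hbu hkl hrk hrl.
Qed.
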